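(* Let $G$ be a finite group and $S\in\mathcal F(G)$. (1) If $S'\in\mathcal F(G)$ and $S\sim S'$, then $\pi(S)=\pi(S')$. (2) Let $S'\in\mathcal F(G)$. If either (a) $S,S'\in\mathcal F(\mathsf Z(G))$, or (b) there is $g\in\pi(S)$ with $\pi(S)=gG'$, then $S\sim S'$ if and only if $\pi(S)=\pi(S')$. (3) If $g,h\in G$ with $g\neq h$, then the one-term sequences $g$ and $h$ satisfy $g\not\sim h$; in particular $|G|\le|\mathcal C(\mathcal B(G),\mathcal F(G))|$. (4) If $g\in\mathsf Z(G)$ and $h\in G$, then $g\boldsymbol{\cdot}h\sim gh$ (the latter being the one-term sequence consisting of the product $gh$). (5) $|\pi(S)|=1$ if and only if the subgroup $\langle\mathrm{supp}(S)\rangle$ is abelian.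
   Context: Let $G$ be a finite group written multiplicatively with identity $1_G$; $G'$ is its commutator subgroup and $\mathsf Z(G)$ its center. $\mathcal F(G_0)$ (for $G_0\subset G$) is the free abelian monoid with basis $G_0$; its elements are sequences $S=g_1\boldsymbol{\cdot}\ldots\boldsymbol{\cdot}g_\ell$ (unordered, repetitions allowed; operation $\boldsymbol{\cdot}$ is concatenation, identity the empty sequence $1_{\mathcal F(G)}$), $\mathrm{supp}(S)$ is the set of distinct terms. $\pi(S)=\{g_{\tau(1)}\cdots g_{\tau(\ell)}:\tau\text{ a permutation of }[1,\ell]\}\subset G$, with $\pi(1_{\mathcal F(G)})=\{1_G\}$. $\mathcal B(G)=\{S\in\mathcal F(G):1_G\in\pi(S)\}$. For $S,S'\in\mathcal F(G)$, write $S\sim S'$ if for all $T\in\mathcal F(G)$: $S\boldsymbol{\cdot}T\in\mathcal B(G)\iff S'\boldsymbol{\cdot}T\in\mathcal B(G)$. This is a congruence on $\mathcal F(G)$; $[S]$ denotes the class of $S$, and the class semigroup $\mathcal C(\mathcal B(G),\mathcal F(G))=\{[S]:S\in\mathcal F(G)\}$ is a commutative semigroup written additively, $[S]+[T]=[S\boldsymbol{\cdot}T]$, with zero $[1_{\mathcal F(G)}]$. *)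

(* Defs.v *)
From mathcomp Require Import all_boot all_fingroup all_solvable.
Set Implicit Arguments. Unset Strict Implicit. Unset Printing Implicit Defensive.
Import GroupScope.

(* Sequences over G (elements of F(G)) are represented as [seq gT]; the
   monoid F(G) is free abelian, so everything below is invariant under
   permutation of the list. Concatenation S.T is [S ++ T]. *)

Definition seqpi (gT : finGroupType) (S : seq gT) : {set gT} :=
  [set g | has (fun s : seq gT => \prod_(x <- s) x == g) (permutations S)].

Definition inB (gT : finGroupType) (S : seq gT) : Prop := 1 \in seqpi S.

(* S ~ S' : the congruence defining the class semigroup C(B(G),F(G)). *)
Definition seqsim (gT : finGroupType) (S S' : seq gT) : Prop :=
  forall T : seq gT, inB (S ++ T) <-> inB (S' ++ T).

Definition seqOver (gT : finGroupType) (G0 : {set gT}) (S : seq gT) : bool :=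
  all (fun x => x \in G0) S.

Definition supp (gT : finGroupType) (S : seq gT) : {set gT} := [set x in S].

(* Main.v *)
Require Import Defs.
From mathcomp Require Import all_boot all_fingroup all_solvable.
Import GroupScope.

Section Helpers.
Variable gT : finGroupType.
Implicit Types (S T U s t a b : seq gT) (g h x y z : gT).

Lemma mem_seqpi S z :
  reflect (exists2 s, perm_eq s S & \prod_(x <- s) x = z) (z \in seqpi S).
Proof.
rewrite inE; apply: (iffP hasP) => [[s]|[s ps e]].
  by rewrite mem_permutations => ps /eqP; exists s.
by exists s; rewrite ?mem_permutations ?e.
Qed.

Lemma seqpi_perm S S' : perm_eq S S' -> seqpi S = seqpi S'.
Proof.
move=> p; apply/setP=> z; apply/mem_seqpi/mem_seqpi => [[s ps e]|[s ps e]];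
  exists s => //.
  by rewrite (perm_trans ps) // perm_sym.
by rewrite (perm_trans ps) // perm_sym.
Qed.

Lemma perm_ins (T0 : eqType) (a b : seq T0) (x : T0) : perm_eq (a ++ x :: b) (x :: (a ++ b)).
Proof. by apply/permPl; rewrite -cat1s; exact: perm_catCA. Qed.

Lemma seqpi_cons x T z :
  reflect (exists a, exists b, perm_eq (a ++ b) T /\
             z = \prod_(y <- a) y * x * \prod_(y <- b) y)
          (z \in seqpi (x :: T)).
Proof.
apply: (iffP (mem_seqpi _ _)).
  move=> [s ps <-].
  have xs : x \in s by rewrite (perm_mem ps) mem_head.
  move: ps; case/splitPr: xs => a b ps.
  exists a, b; split.
    by rewrite -(perm_cons x); apply: perm_trans ps; rewrite perm_sym perm_ins.
  by rewrite big_cat big_cons /= mulgA.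
move=> [a [b [p ->]]]; exists (a ++ x :: b).
  by rewrite (perm_trans (perm_ins _ a b x)) // perm_cons.
by rewrite big_cat big_cons /= mulgA.
Qed.

Lemma inB_inv S g : inB (S ++ [:: g^-1]) <-> g \in seqpi S.
Proof.
rewrite /inB (@seqpi_perm _ ([:: g^-1] ++ S)); last by rewrite perm_catC.
rewrite /=; split.
  case/seqpi_cons => a [b [p e]]; apply/mem_seqpi; exists (b ++ a).
    by rewrite perm_catC.
  rewrite big_cat /=.
  set pa := \prod_(y <- a) y in e *; set pb := \prod_(y <- b) y in e *.
  have h : pb * (pa * g^-1 * pb) * pb^-1 = pb * pa * g^-1 by rewrite !mulgA mulgK.
  rewrite -e mulg1 mulgV in h.
  by apply/eqP; rewrite eq_mulgV1 -h.
case/mem_seqpi => s p e; apply/seqpi_cons; exists s, [::]; split.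
  by rewrite cats0.
by rewrite big_nil mulg1 e mulgV.
Qed.

Lemma part1 S S' : seqsim S S' -> seqpi S = seqpi S'.
Proof.
move=> H; apply/setP => g; apply/idP/idP => hg; apply/inB_inv.
  by apply/(H _); apply/inB_inv.
by apply/(H _); apply/inB_inv.
Qed.

Lemma prod_commute_in (hT : finGroupType) (g : hT) (s : seq hT) :
  {in s, forall w : hT, commute g w} ->
  commute g (\prod_(w <- s) w).
Proof.
elim: s => [|y s IH] c; first by rewrite big_nil; exact: commute1.
rewrite big_cons; apply: commuteM; first by apply: c; rewrite mem_head.
by apply: IH => w ws; apply: c; rewrite inE ws orbT.
Qed.
Arguments prod_commute_in [hT g s].

Lemma central_comm g : g \in 'Z([set: gT]) -> forall x, commute g x.
Proof. by case/centerP => _ c x; apply: c; rewrite inE. Qed.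

Lemma seqpi_central g U z : (forall x, commute g x) ->
  (z \in seqpi (g :: U)) = (g^-1 * z \in seqpi U).
Proof.
move=> c; apply/seqpi_cons/mem_seqpi.
  move=> [a [b [p ->]]]; exists (a ++ b) => //.
  rewrite big_cat -(prod_commute_in (fun y _ => c y)) -!mulgA mulKg //.
move=> [s p e]; exists s, [::]; split; first by rewrite cats0.
by rewrite big_nil mulg1 -(prod_commute_in (fun y _ => c y)) e mulKVg.
Qed.

Lemma seqpi_nil : seqpi [::] = [set 1 : gT].
Proof. by apply/setP => z; rewrite !inE /= big_nil orbF eq_sym. Qed.

Lemma seqpi_centralcat S T z : seqOver 'Z([set: gT]) S ->
  (z \in seqpi (S ++ T)) = ((\prod_(x <- S) x)^-1 * z \in seqpi T).
Proof.
elim: S z => [|g S IH] z /=; first by rewrite big_nil invg1 mul1g.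
case/andP => gz hS; rewrite seqpi_central ?IH //; last exact: central_comm.
by rewrite big_cons invMg mulgA.
Qed.

Lemma perm_prod_comm (hT : finGroupType) (s t : seq hT) :
  {in s &, forall x y : hT, commute x y} -> perm_eq s t ->
  \prod_(x <- s) x = \prod_(x <- t) x.
Proof.
elim: s t => [|x s IH] t hc p.
  by move: p; rewrite perm_sym => /perm_nilP ->.
have xt : x \in t by rewrite -(perm_mem p) mem_head.
move: p; case/splitPr: xt => a b p.
have p' : perm_eq s (a ++ b).
  by rewrite -(perm_cons x); apply: perm_trans p _; exact: perm_ins.
rewrite big_cons (IH (a ++ b)) //; last first.
  by move=> u v us vs; apply: hc; rewrite inE ?us ?vs orbT.
have cxa : commute x (\prod_(y <- a) y).
  apply: prod_commute_in => y ya; apply: hc; first by rewrite mem_head.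
  by rewrite (perm_mem p) mem_cat ya.
by rewrite !big_cat big_cons /= !mulgA cxa.
Qed.

Local Notation H := ([~: [set: gT], [set: gT]]).

Lemma Npt x : x \in 'N(H).
Proof. exact: (subsetP (commg_normr [set: gT]%G [set: gT]) x (in_setT x)). Qed.

Lemma coset_prod s : coset H (\prod_(x <- s) x) = \prod_(u <- map (coset H) s) u.
Proof.
elim: s => [|x s IH]; first by rewrite !big_nil morph1.
by rewrite /= !big_cons coset_morphM ?Npt // IH.
Qed.

Lemma coset_perm s t : perm_eq s t ->
  coset H (\prod_(x <- s) x) = coset H (\prod_(x <- t) x).
Proof.
move=> p; rewrite !coset_prod; apply: perm_prod_comm; last exact: perm_map.
move=> u v /mapP [x _ ->] /mapP [y _ ->].
rewrite /commute -coset_morphM ?Npt // -coset_morphM ?Npt // (commgC x y).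
exact: coset_kerr _ (mem_commg (in_setT x) (in_setT y)).
Qed.
Arguments coset_perm [s t].

Lemma inB_coset S T g : g \in seqpi S -> seqpi S = g *: H ->
  (inB (S ++ T) <-> coset H (\prod_(x <- S) x * \prod_(x <- T) x) = 1).
Proof.
move=> gS eS; split.
  case/mem_seqpi => u p e.
  by rewrite -big_cat -(coset_perm p) e morph1.
move=> e1.
have cg : coset H g = coset H (\prod_(x <- S) x).
  by case/mem_seqpi: gS => s p <-; exact: coset_perm.
rewrite coset_morphM ?Npt // -cg in e1.
have e2 : (coset H g)^-1 = coset H (\prod_(x <- T) x) by rewrite -[RHS](mulKg (coset H g)) e1 mulg1.
have tS : (\prod_(x <- T) x)^-1 \in seqpi S.
  rewrite eS mem_lcoset -invMg groupV; apply: coset_idr; first exact: Npt.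
  by rewrite coset_morphM ?Npt // -e2 mulVg.
case/mem_seqpi: tS => s p e; apply/mem_seqpi; exists (s ++ T).
  by rewrite perm_cat2r.
by rewrite big_cat /= e mulVg.
Qed.
Arguments inB_coset [S] T [g].

Lemma part2b S S' g : g \in seqpi S -> seqpi S = g *: H ->
  seqpi S = seqpi S' -> seqsim S S'.
Proof.
move=> gS eS E T.
have gS' : g \in seqpi S' by rewrite -E.
have eS' : seqpi S' = g *: H by rewrite -E.
have cg : coset H g = coset H (\prod_(x <- S) x).
  by case/mem_seqpi: gS => s p <-; exact: coset_perm.
have cg' : coset H g = coset H (\prod_(x <- S') x).
  by case/mem_seqpi: gS' => s p <-; exact: coset_perm.
have key : coset H (\prod_(x <- S) x * \prod_(x <- T) x) =
           coset H (\prod_(x <- S') x * \prod_(x <- T) x).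
  by rewrite !coset_morphM ?Npt // -cg -cg'.
have h1 := inB_coset T gS eS; have h2 := inB_coset T gS' eS'.
split => h.
  by apply/h2.2; rewrite -key; apply: h1.1.
by apply/h1.2; rewrite key; apply: h2.1.
Qed.

Lemma seqpi1 x : seqpi [:: x] = [set x].
Proof.
apply/setP => z; rewrite inE; apply/seqpi_cons/eqP.
  move=> [a [b [/perm_nilP p ->]]].
  by case: a p => [|? ?] //; case: b => [|? ?] // _; rewrite !big_nil mulg1 mul1g.
by move=> ->; exists [::], [::]; rewrite !big_nil mulg1 mul1g.
Qed.

Lemma part4 g h : g \in 'Z([set: gT]) -> seqsim [:: g; h] [:: g * h].
Proof.
move=> /central_comm c T; rewrite /inB /= seqpi_central //.
have -> : forall z, (z \in seqpi (g * h :: T)) = (g^-1 * z \in seqpi (h :: T)).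
  move=> z; apply/seqpi_cons/seqpi_cons.
    move=> [a [b [p ->]]]; exists a, b; split => //.
    by rewrite (mulgA _ g h) -(prod_commute_in (fun y _ => c y)) -!mulgA mulKg.
  move=> [a [b [p e]]]; exists a, b; split => //.
  rewrite -(mulKVg g z) e !mulgA (prod_commute_in (fun y _ => c y)) //.
by [].
Qed.

Lemma part5 S : #|seqpi S| = 1%N <-> abelian <<supp S>>.
Proof.
split.
  move=> /eqP /cards1P [c ec]; rewrite abelian_gen.
  apply/centsP => x; rewrite inE => xS y; rewrite inE => yS.
  case: (eqVneq x y) => [-> //|nxy].
  have yr : y \in rem x S by apply: rem_mem; rewrite // eq_sym.
  set R := rem y (rem x S).
  have p1 : perm_eq (x :: y :: R) S.
    rewrite perm_sym (perm_trans (perm_to_rem xS)) // perm_cons.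
    exact: perm_to_rem.
  have p2 : perm_eq (y :: x :: R) S.
    apply: perm_trans p1; apply/permPl; exact: (perm_catCA [:: y] [:: x] R).
  have m1 : x * (y * \prod_(u <- R) u) \in seqpi S.
    by apply/mem_seqpi; exists (x :: y :: R); rewrite // !big_cons.
  have m2 : y * (x * \prod_(u <- R) u) \in seqpi S.
    by apply/mem_seqpi; exists (y :: x :: R); rewrite // !big_cons.
  rewrite ec !inE in m1 m2.
  move/eqP: m1; move/eqP: m2; rewrite !mulgA => <- /mulIg.
  by rewrite /commute => ->.
move=> ab.
have cS : {in S &, forall x y, commute x y}.
  move=> x y xS yS.
  have xA : x \in <<supp S>> by apply: mem_gen; rewrite inE.
  have yA : y \in <<supp S>> by apply: mem_gen; rewrite inE.
  exact: (centP (subsetP ab x xA)) y yA.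
suff -> : seqpi S = [set \prod_(x <- S) x] by rewrite cards1.
apply/setP => z; rewrite in_set1; apply/mem_seqpi/eqP.
  move=> [s p <-]; apply: perm_prod_comm => //.
  by move=> u v us vs; apply: cS; rewrite -(perm_mem p).
by move=> ->; exists S.
Qed.

End Helpers.

Theorem lemma3p6 (gT : finGroupType) (S : seq gT) :
  (* (1) *)
  (forall S' : seq gT, seqsim S S' -> seqpi S = seqpi S') /\
  (* (2) *)
  (forall S' : seq gT,
     (seqOver 'Z([set: gT]) S /\ seqOver 'Z([set: gT]) S') \/
     (exists2 g, g \in seqpi S & seqpi S = g *: [~: [set: gT], [set: gT]]) ->
     (seqsim S S' <-> seqpi S = seqpi S')) /\
  (* (3) *)
  ((forall g h : gT, g != h -> ~ seqsim [:: g] [:: h]) /\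
   (* |G| <= |C(B(G),F(G))| : an injection from G into the set of classes *)
   (exists f : gT -> seq gT, forall g h : gT, seqsim (f g) (f h) -> g = h)) /\
  (* (4) *)
  (forall g h : gT, g \in 'Z([set: gT]) -> seqsim [:: g; h] [:: g * h]) /\
  (* (5) *)
  (#|seqpi S| = 1%N <-> abelian <<supp S>>).
Proof.
split; first exact: part1.
split.
  move=> S' hyp; split; first exact: part1.
  case: hyp => [[hS hS'] E|[g gS eS] E]; last exact: part2b gS eS E.
  have pS : \prod_(x <- S) x \in seqpi S'.
    by rewrite -E; apply/mem_seqpi; exists S.
  rewrite -[S']cats0 seqpi_centralcat // seqpi_nil inE in pS.
  have ep : \prod_(x <- S') x = \prod_(x <- S) x.
    by apply/eqP; rewrite eq_mulVg1.
  by move=> T; rewrite /inB !seqpi_centralcat // ep.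
split.
  split.
    move=> g h ngh /part1; rewrite !seqpi1 => /set1_inj e.
    by rewrite e eqxx in ngh.
  by exists (fun g => [:: g]) => g h /part1; rewrite !seqpi1 => /set1_inj.
split; first exact: part4.
exact: part5.
Qed.
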